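(* Let $\psi:\mathsf{Pol}\to\mathsf{N}$ be a linear map with $\psi(1)=\psi(x_i)=0$ for $1\le i\le n$, and let $\phi:\mathsf{N}\times\mathsf{N}\to\mathsf{N}$ be a bidifferential operator vanishing on constants (i.e. $\phi(c,f)=\phi(f,c)=0$ for constants $c$). Suppose that for every $k\ge2$ and every choice of indices $i_1,\dots,i_k\in\{1,\dots,n\}$, $$\sum_{(i_1,\ldots,i_k)}\delta\psi(x_{i_1},x_{i_2}\cdots x_{i_k})=\sum_{(i_1,\ldots,i_k)}\phi(x_{i_1},x_{i_2}\cdots x_{i_k}).$$ Then $\psi$ is the restriction to $\mathsf{Pol}$ of a differential operator on $\mathsf{N}$ vanishing on constants.
   Context: $\mathsf{N}=C^\infty(\mathbb{R}^n)$ with coordinates $x_1,\dots,x_n$, $\mathsf{Pol}=\mathbb{R}[x_1,\dots,x_n]$. The Hochschild coboundary of a linear map $\psi$ is $\delta\psi(f,g)=f\psi(g)-\psi(fg)+\psi(f)g$. For a function $F$ of $k$ arguments, $\sum_{(i_1,\ldots,i_k)}F(x_{i_1},\ldots,x_{i_k})$ denotes the sum over the $k$ cyclic permutations of $(x_{i_1},\ldots,x_{i_k})$; here the arguments are $x_{i_1}$ and the product $x_{i_2}\cdots x_{i_k}$ of the remaining cyclically ordered variables. *)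

(* Defs.v *)
From HB Require Import structures.
From mathcomp Require Import all_boot all_order all_algebra.
From mathcomp Require Import mpoly.
From mathcomp Require Import all_classical all_reals all_analysis.
Set Implicit Arguments. Unset Strict Implicit. Unset Printing Implicit Defensive.
Import Order.TTheory GRing.Theory Num.Theory.
Import numFieldNormedType.Exports.
Local Open Scope ring_scope.

(* Points of R^n are row vectors 'rV[R]_n ; N = C^oo(R^n) is the set of
   functions 'rV[R]_n -> R all of whose iterated partial derivatives exist
   and are continuous. *)

Notation Pol n R := (mpoly.mpoly n R).

Section Defs.
Variables (R : realType) (n : nat).

Definition unitv (i : 'I_n) : 'rV[R]_n := delta_mx 0 i.

Definition pderivs (s : seq 'I_n) (f : 'rV[R]_n -> R) : 'rV[R]_n -> R :=
  foldr (fun i g => (fun x => 'D_(unitv i) g x)) f s.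

Definition smooth (f : 'rV[R]_n -> R) : Prop :=
  forall s : seq 'I_n,
    continuous (pderivs s f) /\
    forall (i : 'I_n) (x : 'rV[R]_n), derivable (pderivs s f) x (unitv i).

(* linear differential operator with smooth coefficients,
   given by a finite list of (coefficient, multi-index as sequence of
   partial derivatives):  D f = sum_j a_j * d^{s_j} f *)
Definition diffop_apply (L : seq (('rV[R]_n -> R) * seq 'I_n))
    (f : 'rV[R]_n -> R) : 'rV[R]_n -> R :=
  fun x => \sum_(c <- L) c.1 x * pderivs c.2 f x.

Definition is_diffop (D : ('rV[R]_n -> R) -> ('rV[R]_n -> R)) : Prop :=
  exists L : seq (('rV[R]_n -> R) * seq 'I_n),
    (forall c, c \in L -> smooth c.1) /\
    (forall f, smooth f -> D f = diffop_apply L f).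

Definition bidiffop_apply (L : seq (('rV[R]_n -> R) * seq 'I_n * seq 'I_n))
    (f g : 'rV[R]_n -> R) : 'rV[R]_n -> R :=
  fun x => \sum_(c <- L) c.1.1 x * pderivs c.1.2 f x * pderivs c.2 g x.

Definition is_bidiffop (B : ('rV[R]_n -> R) -> ('rV[R]_n -> R) -> ('rV[R]_n -> R))
  : Prop :=
  exists L : seq (('rV[R]_n -> R) * seq 'I_n * seq 'I_n),
    (forall c, c \in L -> smooth c.1.1) /\
    (forall f g, smooth f -> smooth g -> B f g = bidiffop_apply L f g).

Definition polX (i : 'I_n) : mpoly.mpoly n R := mpoly.mpolyX R (mpoly.mnm1 i).
Definition polfun (p : mpoly.mpoly n R) : 'rV[R]_n -> R :=
  fun x => mpoly.meval (fun i => x ord0 i) p.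

Definition hoch (psi : mpoly.mpoly n R -> 'rV[R]_n -> R) (f g : mpoly.mpoly n R) : 'rV[R]_n -> R :=
  fun x => polfun f x * psi g x - psi (f * g) x + psi f x * polfun g x.

(* sum over the k cyclic permutations of (x_{i_1},...,x_{i_k}) of
   F(x_{i_1}, x_{i_2} ... x_{i_k}) *)
Definition cycsum (F : mpoly.mpoly n R -> mpoly.mpoly n R -> 'rV[R]_n -> R) (s : seq 'I_n)
  : 'rV[R]_n -> R :=
  fun x => \sum_(j < size s)
     F (head 0 (rot j (map polX s))) (\prod_(q <- behead (rot j (map polX s))) q) x.

End Defs.

(* Main.v *)
Require Import Defs.
From HB Require Import structures.
From mathcomp Require Import all_boot all_order all_algebra.
From mathcomp Require Import mpoly.
From mathcomp Require Import all_classical all_reals all_analysis.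
From mathcomp Require Import ring zify.
Import Order.TTheory GRing.Theory Num.Theory.
Import numFieldNormedType.Exports.
Local Open Scope ring_scope.

Section A.
Context {R : realType} {n : nat}.

Definition mders (s : seq 'I_n) (p : {mpoly R[n]}) : {mpoly R[n]} :=
  foldr (fun i q => mderiv i q) p s.

Definition Qp (p : {mpoly R[n]}) : Prop :=
  continuous (polfun p) /\ forall i x, derivable (polfun p) x (unitv R i) /\
   'D_(unitv R i) (polfun p) x = polfun (mderiv i p) x.

Lemma QpC c : Qp c%:MP.
Proof. rewrite ?/Qp.
have -> : polfun c%:MP = (fun _ : 'rV[R]_n => c) by apply: funext => x; rewrite /polfun mevalC.
split; first exact: cst_continuous.
move=> i x; split; first exact: derivable_cst.
by rewrite derive_cst mderivC /polfun meval0.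
Qed.

Lemma QpX j : Qp (polX R j).
Proof. rewrite ?/Qp.
have -> : polfun (polX R j) = (fun x : 'rV[R]_n => x ord0 j).
  by apply: funext => x; rewrite /polfun /polX mevalXU.
split; first exact: coord_continuous.
move=> i x.
have dif := @differentiable_coord R 1 n x ord0 j.
split; first exact: diff_derivable.
rewrite deriveE //.
have @f : {linear 'M[R]_(1, n) -> R}.
  by exists (fun N : 'M[R]_(_, _) => N ord0 j); do 2![eexists]; do ?[constructor];
     rewrite ?mxE// => ? *; rewrite ?mxE//; move=> ?; rewrite !mxE.
rewrite (_ : (fun _ => _) = f) // diff_lin; last exact: coord_continuous.
rewrite /= /unitv mxE /polX mderivX mnm1E /polfun mevalZ eqxx /=.
case: eqP => [->|ne]; last by rewrite !mul0r.
have -> : (U_(i) - U_(i) = 0)%MM by apply/mnmP => k; rewrite mnmBE mnm0E subnn.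
by rewrite mpolyX0 meval1 mulr1.
Qed.

Lemma QpD p q : Qp p -> Qp q -> Qp (p + q).
Proof. rewrite ?/Qp.
move=> [cp dp] [cq dq].
have -> : polfun (p + q) = polfun p + polfun q.
  by apply: funext => x; rewrite /polfun mevalD.
split; first by move=> x; apply: continuousD; [exact: cp|exact: cq].
move=> i x; have [d1 e1] := dp i x; have [d2 e2] := dq i x.
split; first exact: derivableD.
by rewrite deriveD // e1 e2 mderivD /polfun mevalD.
Qed.

Lemma QpM p q : Qp p -> Qp q -> Qp (p * q).
Proof. rewrite ?/Qp.
move=> [cp dp] [cq dq].
have -> : polfun (p * q) = polfun p * polfun q.
  by apply: funext => x; rewrite /polfun mevalM.
split; first by move=> x; apply: continuousM; [exact: cp|exact: cq].
move=> i x; have [d1 e1] := dp i x; have [d2 e2] := dq i x.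
split; first exact: derivableM.
rewrite deriveM // e1 e2 mderivM /polfun mevalD !mevalM /=.
by rewrite /GRing.scale /= addrC mulrC [X in _ + X]mulrC.
Qed.

Lemma Qp_all p : Qp p.
Proof. rewrite ?/Qp.
elim/mpolyind: p => [|c m p _ _ Hp].
  by rewrite -mpolyC0; exact: QpC.
apply: QpD => //; rewrite -mul_mpolyC; apply: QpM; first exact: QpC.
rewrite mpolyXE_id; apply: (big_ind Qp); first by rewrite -mpolyC1; exact: QpC.
  exact: QpM.
move=> i _; elim: (m i) => [|k IH]; first by rewrite expr0 -mpolyC1; exact: QpC.
rewrite exprS; apply: QpM => //; exact: QpX.
Qed.


Lemma pderivs_polfun (s : seq 'I_n) (p : {mpoly R[n]}) : pderivs s (polfun p) = polfun (mders s p).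
Proof.
elim: s => [//|a s IH] /=; apply: funext => x; rewrite IH.
by have [_ /(_ a x) [_ ->]] := Qp_all (mders s p).
Qed.

Lemma smooth_polfun (p : {mpoly R[n]}) : smooth (polfun p).
Proof.
move=> s; rewrite pderivs_polfun; have [c d] := Qp_all (mders s p).
by split => // i x; have [] := d i x.
Qed.

Lemma pderivs_cst (s : seq 'I_n) (c : R) :
  pderivs s (fun _ : 'rV[R]_n => c) = (fun _ => if s is [::] then c else 0).
Proof.
elim: s => [//|a s IH] /=; apply: funext => x; rewrite IH.
by case: s IH => [|? ?] _; exact: derive_cst.
Qed.

Lemma smooth_scale (k : R) (f : 'rV[R]_n -> R) : smooth f ->
  smooth (fun x => k * f x).
Proof.
move=> sf.
have E : forall s, pderivs s (fun x => k * f x) = (fun x => k * pderivs s f x).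
  elim => [//|a s IH] /=; apply: funext => x; rewrite IH.
  have [_ /(_ a x) d] := sf s.
  exact: (deriveZ k d).
move=> s; rewrite E; have [c d] := sf s; split.
  by move=> x; apply: continuousM; [exact: cst_continuous|exact: c].
move=> i x; by have := @derivableZ _ _ _ _ k _ _ (d i x).
Qed.


Definition PX (s : seq 'I_n) : {mpoly R[n]} := \prod_(i <- s) polX R i.
Definition rm (j : nat) (s : seq 'I_n) := take j s ++ drop j.+1 s.

Lemma dX (a b : 'I_n) : mderiv a (polX R b) = ((b == a)%:R) *: (1 : {mpoly R[n]}).
Proof.
rewrite /polX mderivX mnm1E; case: eqP => [->|]; last by move=> _; rewrite /= mulr0n !scale0r.
have -> : (U_(a) - U_(a) = 0)%MM by apply/mnmP => k; rewrite mnmBE mnm0E subnn.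
by rewrite mpolyX0.
Qed.

Lemma mders0 (s : seq 'I_n) : mders s 0 = 0.
Proof. by elim: s => //= a s ->; rewrite mderiv0. Qed.

Lemma mdersD (s : seq 'I_n) (p q : {mpoly R[n]}) : mders s (p + q) = mders s p + mders s q.
Proof. by elim: s => //= a s ->; rewrite mderivD. Qed.

Lemma mdersZ (s : seq 'I_n) (c : R) (p : {mpoly R[n]}) : mders s (c *: p) = c *: mders s p.
Proof. by elim: s => //= a s ->; rewrite mderivZ. Qed.

Lemma mders_sum (s : seq 'I_n) (I : Type) (r : seq I) (F : I -> {mpoly R[n]}) :
  mders s (\sum_(i <- r) F i) = \sum_(i <- r) mders s (F i).
Proof. by apply: (big_morph _ (mdersD s) (mders0 s)). Qed.

Lemma mders_comm (s : seq 'I_n) g (p : {mpoly R[n]}) : mders s (mderiv g p) = mderiv g (mders s p).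
Proof. by elim: s => //= a s ->; rewrite mderiv_comm. Qed.

Lemma mders_cat (s1 s2 : seq 'I_n) (p : {mpoly R[n]}) : mders (s1 ++ s2) p = mders s1 (mders s2 p).
Proof. by rewrite /mders foldr_cat. Qed.

Lemma rot_nth (i0 : 'I_n) j (s : seq 'I_n) : (j < size s)%N ->
  rot j s = nth i0 s j :: (drop j.+1 s ++ take j s).
Proof. by move=> H; rewrite /rot (drop_nth i0 H). Qed.

Lemma PX_rm (i0 : 'I_n) j (s : seq 'I_n) : (j < size s)%N ->
  polX R (nth i0 s j) * PX (rm j s) = PX s.
Proof.
move=> H; rewrite /PX /rm -[in RHS](cat_take_drop j s) (drop_nth i0 H).
by rewrite !big_cat big_cons /= mulrCA.
Qed.

Lemma cycsumE (F : {mpoly R[n]} -> {mpoly R[n]} -> 'rV[R]_n -> R) s (i0 : 'I_n) :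
  cycsum F s = fun x => \sum_(j < size s) F (polX R (nth i0 s j)) (PX (rm j s)) x.
Proof.
apply: funext => x; rewrite /cycsum; apply: eq_bigr => j _.
rewrite -map_rot (rot_nth i0 _ _ (ltn_ord j)) /= big_map /PX /rm !big_cat /=.
by rewrite mulrC.
Qed.

Lemma L0 (i0 : 'I_n) (a : 'I_n) (s : seq 'I_n) :
  \sum_(j < size s) (nth i0 s j == a)%:R *: PX (rm j s) = mderiv a (PX s).
Proof.
elim: s => [|b s IH].
  by rewrite big_ord0 /PX big_nil -mpolyC1 mderivC.
rewrite big_ord_recl.
have -> : PX (b :: s) = polX R b * PX s by rewrite /PX big_cons.
rewrite mderivM dX.
congr (_ + _); first by rewrite /rm /= drop0 -scalerAl mul1r.
rewrite -IH mulr_sumr; apply: eq_bigr => j _.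
rewrite /rm /= add0n /bump leq0n add1n {1}/PX big_cons -/(PX _).
by rewrite -scalerAr.
Qed.

Lemma L1 (i0 : 'I_n) (s g : seq 'I_n) :
  \sum_(j < size s) polX R (nth i0 s j) * mders g (PX (rm j s))
   + (size g)%:R *: mders g (PX s) = (size s)%:R *: mders g (PX s).
Proof.
elim: g => [|g gs IH] /=.
  rewrite scale0r addr0.
  rewrite (eq_bigr (fun _ => PX s)); last by move=> j _; exact: PX_rm.
  by rewrite sumr_const card_ord scaler_nat.
have E : forall j : 'I_(size s), polX R (nth i0 s j) * mderiv g (mders gs (PX (rm j s))) =
   mderiv g (polX R (nth i0 s j) * mders gs (PX (rm j s)))
   - (nth i0 s j == g)%:R *: mders gs (PX (rm j s)).
  by move=> j; rewrite mderivM dX -scalerAl mul1r addrC addKr.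
rewrite (eq_bigr _ (fun j _ => E j)) sumrB.
have S1 : forall F : 'I_(size s) -> {mpoly R[n]},
    \sum_j mderiv g (F j) = mderiv g (\sum_j F j).
  by move=> F; rewrite -(mders_sum [:: g]).
rewrite S1.
have -> : \sum_(j < size s) (nth i0 s j == g)%:R *: mders gs (PX (rm j s)) =
   mderiv g (mders gs (PX s)).
  rewrite -mders_comm -(L0 i0) mders_sum; apply: eq_bigr => j _; by rewrite mdersZ.
have IH' : \sum_(j < size s) polX R (nth i0 s j) * mders gs (PX (rm j s)) =
    (size s)%:R *: mders gs (PX s) - (size gs)%:R *: mders gs (PX s).
  by rewrite -IH addrK.
rewrite IH' mderivB !mderivZ.
set T := mderiv g (mders gs (PX s)).
rewrite -natr1 scalerDl scale1r.
by rewrite addrA [_ - T + _]addrAC subrK subrK.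
Qed.


Lemma smooth_cst (c : R) : smooth (fun _ : 'rV[R]_n => c).
Proof.
move=> s; rewrite pderivs_cst; split.
  by case: s => [|? ?]; exact: cst_continuous.
by move=> i x; case: s => [|? ?]; exact: derivable_cst.
Qed.

Lemma mders_X (a : 'I_n) (s : seq 'I_n) : mders s (polX R a) =
  if s is [::] then polX R a else if s is [:: b] then (a == b)%:R *: 1 else 0.
Proof.
elim: s => [//|b s IH] /=; rewrite IH; case: s IH => [|c s] _ /=; first exact: dX.
case: s => [|? ?]; last exact: mderiv0.
by rewrite mderivZ -mpolyC1 mderivC scaler0.
Qed.

Lemma pd_X (s : seq 'I_n) (a : 'I_n) x :
  pderivs s (polfun (polX R a)) x = (s == [::])%:R * x ord0 a + (s == [:: a])%:R.
Proof.
rewrite pderivs_polfun mders_X /polfun.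
case: s => [|b [|c s]] /=.
- by rewrite mevalXU mul1r addr0.
- by rewrite mevalZ meval1 mulr1 mul0r add0r eqseq_cons andbT eq_sym.
- by rewrite meval0 mul0r add0r eqseq_cons /= andbF.
Qed.

Lemma pd_1 (s : seq 'I_n) x : pderivs s (fun _ : 'rV[R]_n => (1 : R)) x = (s == [::])%:R.
Proof. by rewrite pderivs_cst; case: s. Qed.

Definition Pc (c : ('rV[R]_n -> R) * seq 'I_n * seq 'I_n) :=
  (size c.1.2 == 1%N) && (c.2 != [::]).

Lemma Phi (phi : ('rV[R]_n -> R) -> ('rV[R]_n -> R) -> ('rV[R]_n -> R))
  (A : seq (('rV[R]_n -> R) * seq 'I_n * seq 'I_n)) :
  (forall f g, smooth f -> smooth g -> phi f g = bidiffop_apply A f g) ->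
  (forall (c : R) (f : 'rV[R]_n -> R), smooth f ->
     phi (fun _ => c) f = (fun _ => 0) /\ phi f (fun _ => c) = (fun _ => 0)) ->
  forall a g x, smooth g ->
  phi (polfun (polX R a)) g x =
    \sum_(c <- A | Pc c) (c.1.2 == [:: a])%:R * c.1.1 x * pderivs c.2 g x.
Proof.
move=> hA hc a g x sg.
have z1 : \sum_(c <- A) c.1.1 x * (c.1.2 == [::])%:R * pderivs c.2 g x = 0.
  have := hc 1 g sg => -[/(congr1 (fun h => h x)) + _].
  rewrite hA //; last exact: smooth_cst.
  rewrite /bidiffop_apply /= => E; rewrite -[RHS]E; apply: eq_bigr => c _; by rewrite pd_1.
have z2 : \sum_(c <- A) c.1.1 x * ((c.1.2 == [::])%:R * x ord0 a + (c.1.2 == [:: a])%:R)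
    * (c.2 == [::])%:R = 0.
  have := hc 1 _ (smooth_polfun (polX R a)) => -[_ /(congr1 (fun h => h x))].
  rewrite hA //; last exact: smooth_cst; last exact: smooth_polfun.
  rewrite /bidiffop_apply /= => E; rewrite -[RHS]E; apply: eq_bigr => c _; by rewrite pd_1 pd_X.
have z3 : \sum_(c <- A) c.1.1 x * (c.1.2 == [::])%:R * (c.2 == [::])%:R = 0.
  have := hc 1 _ (smooth_cst 1) => -[_ /(congr1 (fun h => h x))].
  rewrite hA //; try exact: smooth_cst.
  rewrite /bidiffop_apply /= => E; rewrite -[RHS]E; apply: eq_bigr => c _; by rewrite !pd_1.
rewrite hA //; last exact: smooth_polfun.
rewrite /bidiffop_apply [RHS]big_mkcond /=.
have T : forall c : ('rV[R]_n -> R) * seq 'I_n * seq 'I_n,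
  c.1.1 x * pderivs c.1.2 (polfun (polX R a)) x * pderivs c.2 g x =
  x ord0 a * (c.1.1 x * (c.1.2 == [::])%:R * pderivs c.2 g x)
  + g x * (c.1.1 x * ((c.1.2 == [::])%:R * x ord0 a + (c.1.2 == [:: a])%:R)
    * (c.2 == [::])%:R)
  - g x * x ord0 a * (c.1.1 x * (c.1.2 == [::])%:R * (c.2 == [::])%:R)
  + (if Pc c then (c.1.2 == [:: a])%:R * c.1.1 x * pderivs c.2 g x else 0).
  move=> [[f s] t] /=; rewrite pd_X /Pc /=.
  case: s => [|b [|b' s']] /=; case: t => [|t0 t'] /=.
  - by rewrite mulr1n !mulr0n; ring.
  - by rewrite mulr1n !mulr0n; ring.
  - by rewrite !mulr0n; ring.
  - by rewrite !mulr0n /=; ring.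
  - by rewrite !mulr0n; ring.
  - by rewrite !mulr0n eqseq_cons /= andbF mulr0n; ring.
rewrite (eq_bigr _ (fun c _ => T c)) !big_split /= sumrN -!mulr_sumr z1 z2 z3.
by rewrite !mulr0 subr0 !add0r.
Qed.


Lemma polfunD (p q : {mpoly R[n]}) x : polfun (p + q) x = polfun p x + polfun q x.
Proof. by rewrite /polfun mevalD. Qed.
Lemma polfunB (p q : {mpoly R[n]}) x : polfun (p - q) x = polfun p x - polfun q x.
Proof. by rewrite /polfun mevalB. Qed.
Lemma polfunM (p q : {mpoly R[n]}) x : polfun (p * q) x = polfun p x * polfun q x.
Proof. by rewrite /polfun mevalM. Qed.
Lemma polfunZ c (p : {mpoly R[n]}) x : polfun (c *: p) x = c * polfun p x.
Proof. by rewrite /polfun mevalZ. Qed.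
Lemma polfun0 x : polfun (0 : {mpoly R[n]}) x = 0.
Proof. by rewrite /polfun meval0. Qed.
Lemma polfun_sum (I : Type) (r : seq I) (F : I -> {mpoly R[n]}) x :
  polfun (\sum_(i <- r) F i) x = \sum_(i <- r) polfun (F i) x.
Proof. by apply: (big_morph _ (fun p q => polfunD p q x) (polfun0 x)). Qed.

Lemma mders1 (s : seq 'I_n) :
  mders s 1 = if s is [::] then 1 else 0.
Proof.
elim: s => [//|b s IH] /=; rewrite IH; case: s IH => [|c s] _ /=.
  by rewrite -mpolyC1 mderivC.
exact: mderiv0.
Qed.

Lemma size_rm j (s : seq 'I_n) : (j < size s)%N -> size (rm j s) = (size s).-1.
Proof.
move=> H; rewrite /rm size_cat size_take size_drop H; lia.
Qed.

Lemma PX_nseq k (i : 'I_n) : PX (nseq k i) = polX R i ^+ k.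
Proof. by elim: k => [|k IH]; rewrite /PX ?big_nil ?expr0 //= big_cons -/(PX _) IH exprS. Qed.

Lemma PX_cat (s1 s2 : seq 'I_n) : PX (s1 ++ s2) = PX s1 * PX s2.
Proof. by rewrite /PX big_cat. Qed.

Lemma X_PX (m : 'X_{1..n}) : exists s, 'X_[m] = PX s.
Proof.
exists (\big[cat/[::]]_(i < n) nseq (m i) i).
have PX0 : PX [::] = 1 by rewrite /PX big_nil.
rewrite (big_morph PX PX_cat PX0) mpolyXE_id.
by apply: eq_bigr => i _; rewrite PX_nseq.
Qed.


Definition coef (c : ('rV[R]_n -> R) * seq 'I_n * seq 'I_n) (x : 'rV[R]_n) :=
  - ((size c.2).+1%:R)^-1 * c.1.1 x.
Definition gam (c : ('rV[R]_n -> R) * seq 'I_n * seq 'I_n) := c.2 ++ c.1.2.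

Lemma per_c (i0 : 'I_n) (s : seq 'I_n) c x : Pc c ->
  \sum_(j < size s) polfun (polX R (nth i0 s j)) x *
      (coef c x * polfun (mders (gam c) (PX (rm j s))) x)
  - \sum_(j < size s) (c.1.2 == [:: nth i0 s j])%:R * c.1.1 x *
      pderivs c.2 (polfun (PX (rm j s))) x
  = (size s)%:R * (coef c x * polfun (mders (gam c) (PX s)) x).
Proof.
case: c => [[a si] t]; rewrite /Pc /= => /andP [hs ht].
case: si hs => [|i [|? ?]] //= _.
rewrite /gam /coef /=.
set K := - ((size t).+1%:R)^-1 * a x.
have S1 : \sum_(j < size s) polfun (polX R (nth i0 s j)) x *
      (K * polfun (mders (t ++ [:: i]) (PX (rm j s))) x) =
    K * polfun (\sum_(j < size s) polX R (nth i0 s j) * mders (t ++ [:: i]) (PX (rm j s))) x.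
  rewrite polfun_sum mulr_sumr; apply: eq_bigr => j _; rewrite polfunM; ring.
have S2 : \sum_(j < size s) ([:: i] == [:: nth i0 s j])%:R * a x *
      pderivs t (polfun (PX (rm j s))) x =
    a x * polfun (mders t (\sum_(j < size s) (nth i0 s j == i)%:R *: PX (rm j s))) x.
  rewrite mders_sum polfun_sum mulr_sumr; apply: eq_bigr => j _.
  by rewrite pderivs_polfun mdersZ polfunZ eqseq_cons andbT eq_sym; ring.
rewrite S1 S2 (L0 i0).
have -> : mders t (mderiv i (PX s)) = mders (t ++ [:: i]) (PX s) by rewrite mders_cat.
have L := L1 i0 s (t ++ [:: i]).
have -> : \sum_(j < size s) polX R (nth i0 s j) * mders (t ++ [:: i]) (PX (rm j s)) =
   (size s)%:R *: mders (t ++ [:: i]) (PX s) - (size (t ++ [:: i]))%:R *: mders (t ++ [:: i]) (PX s).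
  by rewrite -L addrK.
rewrite polfunB !polfunZ size_cat /= addn1 /K.
set M := polfun (mders (t ++ [:: i]) (PX s)) x.
have nz : ((size t).+1%:R : R) != 0 by rewrite pnatr_eq0.
by field.
Qed.

End A.

Theorem lemma2 (R : realType) (n : nat)
  (psi : Pol n R -> 'rV[R]_n -> R)
  (phi : ('rV[R]_n -> R) -> ('rV[R]_n -> R) -> ('rV[R]_n -> R)) :
  (* psi : Pol -> N is linear *)
  (forall p, smooth (psi p)) ->
  (forall (a : R) (p q : Pol n R), psi (a *: p + q) = (fun x => a * psi p x + psi q x)) ->
  psi 1 = (fun _ => 0) ->
  (forall i : 'I_n, psi (polX R i) = (fun _ => 0)) ->
  (* phi is a bidifferential operator on N vanishing on constants *)
  is_bidiffop phi ->
  (forall (c : R) (f : 'rV[R]_n -> R), smooth f ->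
     phi (fun _ => c) f = (fun _ => 0) /\ phi f (fun _ => c) = (fun _ => 0)) ->
  (* the cyclic-sum identity for all k >= 2 and all i_1..i_k *)
  (forall s : seq 'I_n, (2 <= size s)%N ->
     cycsum (hoch psi) s = cycsum (fun f g => phi (polfun f) (polfun g)) s) ->
  (* conclusion *)
  exists D : ('rV[R]_n -> R) -> ('rV[R]_n -> R),
    is_diffop D /\
    (forall c : R, D (fun _ => c) = (fun _ => 0)) /\
    (forall p : Pol n R, psi p = D (polfun p)).
Proof.
move=> psm plin p1 pX [A [hAs hA]] hc hcyc.
pose Dp (q : {mpoly R[n]}) (x : 'rV[R]_n) :=
  \sum_(c <- A | Pc c) coef c x * polfun (mders (gam c) q) x.
pose L' := [seq (coef c, gam c) | c <- A & Pc c].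
have DE : forall q, diffop_apply L' (polfun q) = Dp q.
  move=> q; apply: funext => x; rewrite /diffop_apply big_map big_filter.
  by apply: eq_bigr => c _ /=; rewrite pderivs_polfun.
exists (diffop_apply L'); split.
  exists L'; split => // c /mapP [c0]; rewrite mem_filter => /andP [_ c0A] -> /=.
  rewrite /coef; apply: smooth_scale; exact: hAs.
split.
  move=> c; apply: funext => x; rewrite /diffop_apply big_map big_filter big1 // => e He.
  rewrite pderivs_cst /gam.
  case: e He => [[f s] [|t0 t]]; rewrite /Pc /= ?andbF // => _; by rewrite mulr0.
have hps0 : psi 0 = (fun _ => 0).
  apply: funext => x; have := congr1 (fun h => h x) (plin 1 0 0).
  rewrite scaler0 addr0 /= mul1r => E.
  by apply: (addrI (psi 0 x)); rewrite addr0 -E.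
have Dlin : forall a p q x, Dp (a *: p + q) x = a * Dp p x + Dp q x.
  move=> a p q x; rewrite /Dp mulr_sumr -big_split; apply: eq_bigr => c _ /=.
  by rewrite mdersD mdersZ polfunD polfunZ; ring.
have D0 : forall x, Dp 0 x = 0.
  by move=> x; rewrite /Dp big1 // => c _; rewrite mders0 polfun0 mulr0.
have base0 : psi (PX [::] : {mpoly R[n]}) = Dp (PX [::]).
  rewrite /PX big_nil p1; apply: funext => x; rewrite /Dp big1 // => c.
  rewrite mders1 /gam; case: c => [[f s'] [|t0 t]]; rewrite /Pc /= ?andbF // => _.
  by rewrite polfun0 mulr0.
have mono : forall k (s : seq 'I_n), (size s <= k)%N -> psi (PX s) = Dp (PX s).
  elim=> [|k IH] s hs.
    by case: s hs.
  case: s hs => [|b [|b' s']] hs.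
  - exact: base0.
  - have -> : (PX [:: b] : {mpoly R[n]}) = polX R b by rewrite /PX big_seq1.
    rewrite pX; apply: funext => x; rewrite /Dp big1 // => c.
    rewrite mders_X /gam; case: c => [[f [|i [|? ?]]] [|t0 t]]; rewrite /Pc /= ?andbF // => _.
    by case: t => [|? ?] /=; rewrite polfun0 mulr0.
  move: hs; set s := b :: b' :: s' => hs.
  apply: funext => x.
  have H := hcyc s isT.
  rewrite !(cycsumE _ s b) in H.
  have Hx := congr1 (fun h => h x) H; rewrite /= /hoch in Hx.
  have IHj : forall j : 'I_(size s), psi (PX (rm j s)) = Dp (PX (rm j s)).
    move=> j; apply: IH; rewrite size_rm //; move: hs; rewrite /=; lia.
  rewrite (eq_bigr (fun j : 'I_(size s) => polfun (polX R (nth b s j)) x * Dp (PX (rm j s)) x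
     - psi (PX s) x)) in Hx; last first.
    by move=> j _; rewrite IHj PX_rm // pX mul0r addr0.
  rewrite [X in _ = X](eq_bigr (fun j : 'I_(size s) => \sum_(c <- A | Pc c) (c.1.2 == [:: nth b s j])%:R
      * c.1.1 x * pderivs c.2 (polfun (PX (rm j s))) x)) in Hx; last first.
    by move=> j _; rewrite (Phi _ _ hA hc) //; exact: smooth_polfun.
  rewrite sumrB sumr_const card_ord in Hx.
  have C : \sum_(j < size s) polfun (polX R (nth b s j)) x * Dp (PX (rm j s)) x
      - \sum_(j < size s) \sum_(c <- A | Pc c) (c.1.2 == [:: nth b s j])%:R
         * c.1.1 x * pderivs c.2 (polfun (PX (rm j s))) x
      = (size s)%:R * Dp (PX s) x.
    rewrite /Dp mulr_sumr.
    under eq_bigr do rewrite mulr_sumr.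
    rewrite exchange_big [X in _ - X]exchange_big /= -sumrB.
    by apply: eq_bigr => c Pcc; exact: (per_c b s c x Pcc).
  have E : (size s)%:R * psi (PX s) x = (size s)%:R * Dp (PX s) x.
    by rewrite -C -Hx -mulr_natl; ring.
  have nz : (size s)%:R != (0 : R) by rewrite pnatr_eq0.
  exact: (mulfI nz E).
have main : forall q, psi q = Dp q.
  elim/mpolyind => [|c m p _ _ IHp].
    by rewrite hps0; apply: funext => x; rewrite D0.
  rewrite plin; apply: funext => x; rewrite Dlin IHp.
  by have [s ->] := @X_PX R n m; rewrite (mono (size s) s (leqnn _)).
by move=> p; rewrite DE; exact: main.
Qed.
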